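(* Let $G$ be a finite connected multigraph and $D\in\operatorname{Div}(G)$. Then the limit $\lim_{\ell\to\infty} r(\ell D)/\ell$ exists (and hence equals $\operatorname{vol}^{\mathbb{T}}_G(D)$).
   Context: A multigraph allows loops and multiple edges; $G$ is finite and connected. $\operatorname{Div}(G)=\bigoplus_{v\in V(G)}\mathbb{Z}v$. For $f:V(G)\to\mathbb{Z}$, $\operatorname{div}(f)=\sum_v\big(\sum_{e\text{ non-loop edge joining }v\text{ to }w}(f(v)-f(w))\big)v$; $D\sim D'$ iff $D-D'$ is principal. $|D|=\{D'\ge 0: D'\sim D\}$. Baker--Norine rank: $r(D)=-1$ if $|D|=\varnothing$, otherwise $r(D)=\max\{d: |D-E|\ne\varnothing\ \forall E\ge 0,\ \deg E=d\}$. The tropical volume is $\operatorname{vol}^{\mathbb{T}}_G(D)=\limsup_{\ell\to\infty} r(\ell D)/\ell$. *)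

(* Defs.v *)
From HB Require Import structures.
From mathcomp Require Import all_boot all_order all_algebra.
From mathcomp Require Import boolp.
Set Implicit Arguments. Unset Strict Implicit. Unset Printing Implicit Defensive.
Import Order.TTheory GRing.Theory Num.Theory.
Local Open Scope ring_scope.

(* A finite multigraph: finite vertex and edge types; each edge has two
   (possibly equal) endpoints.  Loops and parallel edges are allowed. *)
Record multigraph := MultiGraph {
  vert : finType;
  edge : finType;
  ends : edge -> vert * vert }.

Section Divisors.
Variable G : multigraph.

Definition adjacent : rel (vert G) :=
  fun v w => [exists e : edge G, (ends e == (v, w)) || (ends e == (w, v))].

Definition connected_graph : Prop := forall v w : vert G, connect adjacent v w.

Definition divisor := {ffun vert G -> int}.

Definition deg (D : divisor) : int := \sum_(v : vert G) D v.

Definition effective (D : divisor) : Prop := forall v, 0 <= D v.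

Definition div_of (f : vert G -> int) : divisor :=
  [ffun v => \sum_(e : edge G)
     (if (ends e).1 != (ends e).2 then
        (if (ends e).1 == v then f v - f (ends e).2
         else if (ends e).2 == v then f v - f (ends e).1 else 0)
      else 0)].

Definition principal (D : divisor) : Prop := exists f, D = div_of f.

Definition lin_equiv (D D' : divisor) : Prop := principal (D - D').

Definition linsys_nonempty (D : divisor) : Prop :=
  exists D', effective D' /\ lin_equiv D' D.

Definition rank_ge (D : divisor) (d : nat) : Prop :=
  forall E : divisor, effective E -> deg E = d%:Z -> linsys_nonempty (D - E).

(* Baker--Norine rank: max of {d | rank_ge D d}, and -1 when |D| is empty
   (in which case rank_ge D 0 fails, so no such maximum exists). *)
Definition rank (D : divisor) : int :=
  match pselect (exists d : nat, rank_ge D d /\ forall d', rank_ge D d' -> (d' <= d)%N) with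
  | left H => (proj1_sig (cid H))%:Z
  | right _ => -1
  end.

End Divisors.

(* Main.v *)
Require Import Defs.
From HB Require Import structures.
From mathcomp Require Import all_boot all_order all_algebra.
From mathcomp Require Import all_classical all_reals all_analysis.
From mathcomp Require Import Rstruct Rstruct_topology.
From mathcomp Require Import zify.
Import Order.TTheory GRing.Theory Num.Theory.
Set Implicit Arguments. Unset Strict Implicit. Unset Printing Implicit Defensive.
Local Open Scope ring_scope.

Section Comb.
Variable G : multigraph.
Local Notation V := (vert G).
Local Notation Ed := (edge G).

Definition lapR (R : zmodType) (g : V -> R) (v : V) : R :=
  \sum_(e : Ed) (if (ends e).1 != (ends e).2 then
        (if (ends e).1 == v then g v - g (ends e).2
         else if (ends e).2 == v then g v - g (ends e).1 else 0)
      else 0).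

Lemma div_ofE f v : div_of f v = lapR f v.
Proof. by rewrite ffunE. Qed.

Lemma sum_lapR (R : zmodType) (g : V -> R) : \sum_v lapR g v = 0.
Proof.
rewrite /lapR exchange_big /= big1 // => e _.
have [ne|eq] := boolP ((ends e).1 != (ends e).2); last by rewrite big1 // => i _; rewrite (negbTE eq).
rewrite (bigD1 (ends e).1) //= eqxx (bigD1 (ends e).2) /=; last by rewrite eq_sym.
rewrite (negbTE ne) eqxx big1 ?addr0; last first.
  by move=> i /andP[ia ib]; rewrite eq_sym (negbTE ia) eq_sym (negbTE ib).
by rewrite addrA subrK subrr.
Qed.

Lemma lapR_add (R : zmodType) (f g : V -> R) v :
  lapR (fun w => f w + g w) v = lapR f v + lapR g v.
Proof.
rewrite /lapR -big_split; apply: eq_bigr => e _ /=.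
by do !case: ifP => _; rewrite ?addr0 // opprD addrACA.
Qed.

Lemma lapR_opp (R : zmodType) (f : V -> R) v :
  lapR (fun w => - f w) v = - lapR f v.
Proof.
rewrite /lapR -sumrN; apply: eq_bigr => e _ /=.
by do !case: ifP => _; rewrite ?oppr0 // opprD.
Qed.

Lemma lapR_scale (R : pzRingType) (c : R) (f : V -> R) v :
  lapR (fun w => c * f w) v = c * lapR f v.
Proof.
rewrite /lapR mulr_sumr; apply: eq_bigr => e _ /=.
by do !case: ifP => _; rewrite ?mulr0 // mulrBr.
Qed.

Lemma lapR_intr (R : pzRingType) (f : V -> int) v :
  (lapR f v)%:~R = lapR (fun w => (f w)%:~R : R) v.
Proof.
rewrite /lapR raddf_sum; apply: eq_bigr => e _ /=.
by do !case: ifP => _; rewrite ?intrB.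
Qed.

Definition degR (R : zmodType) (x : {ffun V -> R}) := \sum_v x v.

Lemma principal0 : principal (0 : divisor G).
Proof.
exists (fun _ => 0); apply/ffunP => v; rewrite !ffunE big1 // => e _.
by do !case: ifP => _; rewrite ?subrr.
Qed.

Lemma principalD (A B : divisor G) : principal A -> principal B -> principal (A + B).
Proof.
move=> [f ->] [g ->]; exists (fun w => f w + g w); apply/ffunP => v.
by rewrite !ffunE; symmetry; exact: lapR_add.
Qed.

Lemma principalN (A : divisor G) : principal A -> principal (- A).
Proof.
move=> [f ->]; exists (fun w => - f w); apply/ffunP => v.
by rewrite !ffunE; symmetry; exact: lapR_opp.
Qed.

Lemma principalZ (c : int) (A : divisor G) : principal A -> principal [ffun v => c * A v].
Proof.
move=> [f ->]; exists (fun w => c * f w); apply/ffunP => v.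
by rewrite !ffunE; symmetry; exact: lapR_scale.
Qed.

Lemma principal_sum (I : finType) (P : pred I) (F : I -> divisor G) :
  (forall i, P i -> principal (F i)) -> principal (\sum_(i | P i) F i).
Proof.
move=> H; apply: (big_ind (@principal G)) => //; first exact: principal0.
exact: principalD.
Qed.

Lemma deg_principal (A : divisor G) : principal A -> deg A = 0.
Proof. by move=> [f ->]; rewrite /deg; under eq_bigr do rewrite div_ofE; exact: sum_lapR. Qed.

Lemma degD (A B : divisor G) : deg (A + B) = deg A + deg B.
Proof. by rewrite /deg -big_split; apply: eq_bigr => v _; rewrite !ffunE. Qed.

Lemma degN (A : divisor G) : deg (- A) = - deg A.
Proof. by rewrite /deg -sumrN; apply: eq_bigr => v _; rewrite !ffunE. Qed.

Lemma degB (A B : divisor G) : deg (A - B) = deg A - deg B.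
Proof. by rewrite degD degN. Qed.

Lemma deg_ge0 (A : divisor G) : effective A -> 0 <= deg A.
Proof. by move=> H; rewrite /deg sumr_ge0. Qed.

End Comb.

Section LinAlg.
Variable G : multigraph.
Hypothesis HG : connected_graph G.
Local Notation V := (vert G).
Variable v0 : V.

Lemma eq_lapR (R : zmodType) (g h : V -> R) v : g =1 h -> lapR g v = lapR h v.
Proof. by move=> H; rewrite /lapR; apply: eq_bigr => e _; rewrite !H. Qed.

Lemma lap_kernel (g : V -> rat) : (forall v, lapR g v = 0) -> forall w, g w = g v0.
Proof.
move=> H.
case: (@arg_maxP _ _ _ v0 predT g isT) => u _ Hu.
have step : forall w w', g w = g u -> Defs.adjacent w w' -> g w' = g u.
  move=> w w' gw /existsP[e he].
  have [->|ne] := eqVneq w' w; first by [].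
  have nn : forall e, true -> 0 <= (if (ends e).1 != (ends e).2 then
        (if (ends e).1 == w then g w - g (ends e).2
         else if (ends e).2 == w then g w - g (ends e).1 else 0)
      else 0).
    move=> e' _; rewrite gw.
    by do !case: ifP => _; rewrite ?subr_ge0 //; apply: Hu.
  have := psumr_eq0P nn (H w) (i := e) isT.
  case/orP: he => /eqP -> /=.
    rewrite eq_sym ne eqxx => /eqP; rewrite subr_eq0 => /eqP <-; exact: gw.
  rewrite ne (negbTE ne) eqxx => /eqP; rewrite subr_eq0 => /eqP <-; exact: gw.
have pathu : forall p x, g x = g u -> path (@Defs.adjacent G) x p -> g (last x p) = g u.
  by elim=> [|a p IH] x //= gx /andP[xa pth]; apply: IH pth; exact: step xa.
have all_u : forall w, g w = g u.
  by move=> w; have /connectP[p pth ->] := HG u w; exact: pathu.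
by move=> w; rewrite !all_u.
Qed.

Definition lapQ (g : {ffun V -> rat^o}) : {ffun V -> rat^o} :=
  [ffun v => (lapR (fun w => (g w : rat)) v : rat^o)].

Lemma lapQ_linear : linear lapQ.
Proof.
move=> a x y; apply/ffunP => v; rewrite !ffunE.
rewrite (@eq_lapR _ _ (fun w => a * (x w : rat) + y w)); last by move=> w; rewrite !ffunE.
by rewrite lapR_add lapR_scale.
Qed.

Lemma solve_lap (x : {ffun V -> rat^o}) : \sum_v (x v : rat) = 0 ->
  exists g : {ffun V -> rat^o}, lapQ g = x.
Proof.
move=> x0.
pose lapM := GRing.isLinear.Build _ _ _ _ lapQ lapQ_linear.
pose lapL : {linear _ -> _} := HB.pack lapQ lapM.
pose f := linfun lapL.
have fE : forall g, f g = lapQ g := lfunE lapL.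
pose one : {ffun V -> rat^o} := [ffun => 1].
pose e0 : {ffun V -> rat^o} := [ffun w => (w == v0)%:R].
have kerS : (lker f <= <[one]>)%VS.
  apply/subvP => g; rewrite memv_ker fE => /eqP H; apply/vlineP; exists (g v0).
  apply/ffunP => w; rewrite !ffunE -[RHS]/((g v0 : rat) * 1) mulr1; apply: lap_kernel => v.
  by have := congr1 (fun h : {ffun V -> rat^o} => h v) H; rewrite !ffunE.
have dker : (\dim (lker f) <= 1)%N.
  by apply: leq_trans (dimvS kerS) _; rewrite dim_vline leq_b1.
have Hd := limg_ker_dim f fullv; rewrite capfv in Hd.
have sum_e0 : forall c : rat, \sum_w ((c *: e0) w : rat) = c.
  move=> c; rewrite (bigD1 v0) //= big1 ?addr0; first by rewrite !ffunE eqxx; exact: mulr1.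
  by move=> w wv; rewrite !ffunE (negbTE wv); exact: mulr0.
have sum_lap : forall u, \sum_w (lapQ u w : rat) = 0.
  by move=> u; under eq_bigr do rewrite ffunE; exact: sum_lapR.
have dis : (f @: fullv :&: <[e0]> = 0)%VS.
  apply/eqP; rewrite -subv0; apply/subvP => y.
  rewrite memv_cap => /andP[/memv_imgP[u _ ->] /vlineP[c Hc]]; rewrite memv0.
  have c0 : c = 0 by rewrite -(sum_e0 c) -Hc fE sum_lap.
  by rewrite Hc c0 scale0r.
have e0n : e0 != 0.
  apply/eqP => H0; have := congr1 (fun h : {ffun V -> rat^o} => h v0) H0; rewrite !ffunE eqxx => /eqP.
  by rewrite oner_eq0.
have dsum := dimv_disjoint_sum dis; rewrite dim_vline e0n in dsum.
have full : (fullv <= f @: fullv + <[e0]>)%VS.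
  have [_ <-] := dimv_leqif_sup (subvf (f @: fullv + <[e0]>)%VS).
  rewrite eqn_leq dimvS ?subvf //= dsum -Hd.
  by rewrite addnC leq_add2l.
have xin : x \in (f @: fullv + <[e0]>)%VS := subvP full x (memvf x).
case/memv_addP: xin => y /memv_imgP[u _ ->] [z /vlineP[c ->] xE].
have := congr1 (fun h : {ffun V -> rat^o} => \sum_w (h w : rat)) xE.
rewrite /= x0; under eq_bigr do rewrite ffunE.
rewrite big_split /= fE sum_lap sum_e0 add0r => c0.
by exists u; rewrite xE -c0 scale0r addr0 fE.
Qed.
End LinAlg.

Section Torsion.
Variable G : multigraph.
Hypothesis HG : connected_graph G.
Local Notation V := (vert G).
Variable v0 : V.

Definition bdiv (v : V) : divisor G := [ffun w => (w == v)%:Z - (w == v0)%:Z].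

Lemma sum_ind (R : pzRingType) (a : V) : \sum_(w : V) ((w == a)%:R : R) = 1.
Proof.
rewrite (bigD1 a) //= eqxx big1 ?addr0 // => w wa; by rewrite (negbTE wa).
Qed.

Lemma torsion1 v : exists m : int, 0 < m /\ principal [ffun w => m * bdiv v w].
Proof.
pose x : {ffun V -> rat^o} := [ffun w => ((w == v)%:R - (w == v0)%:R : rat)].
have sx : \sum_w (x w : rat) = 0.
  under eq_bigr do rewrite ffunE; rewrite sumrB.
  by rewrite !sum_ind subrr.
have [g gE] := solve_lap HG v0 sx.
pose m : int := \prod_w denq (g w).
pose h (w : V) : int := numq (g w) * \prod_(w' | w' != w) denq (g w').
have hE : forall w, ((h w)%:~R : rat) = m%:~R * (g w : rat).
  move=> w; rewrite /h /m [in RHS](bigD1 w) //= !intrM numqE.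
  by rewrite [RHS]mulrC [RHS]mulrA.
exists m; split; first by apply: prodr_gt0 => w _; exact: denq_gt0.
exists h; apply/ffunP => w; apply: (@intr_inj rat).
rewrite div_ofE ffunE lapR_intr (@eq_lapR _ _ _ (fun w => m%:~R * (g w : rat))) //.
rewrite lapR_scale.
have := congr1 (fun k : {ffun V -> rat^o} => (k w : rat)) gE; rewrite /= !ffunE => ->.
by rewrite intrM intrB.
Qed.

Lemma torsion : exists M : int, 0 < M /\ forall v, principal [ffun w => M * bdiv v w].
Proof.
case: (choice torsion1) => mf Hm.
exists (\prod_v mf v); split; first by apply: prodr_gt0 => v _; case: (Hm v).
move=> v; case: (Hm v) => _ Pv.
have := principalZ (\prod_(v' | v' != v) mf v') Pv.
have -> : \prod_v1 mf v1 = mf v * \prod_(v' | v' != v) mf v' := bigD1 v isT.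
congr principal; apply/ffunP => w; rewrite !ffunE.
set P := \prod_(v' | v' != v) mf v'; set b := (_ - _); nia.
Qed.

Lemma riemann : exists C : int, 0 <= C /\ forall D : divisor G, C <= deg D -> linsys_nonempty D.
Proof.
case: torsion => M [M0 PM].
exists (\sum_(w : V) M); split; first by apply: sumr_ge0 => ? _; exact: ltW.
move=> D hD.
pose md w := (D w %% M)%Z. pose qd w := (D w %/ M)%Z.
pose R : divisor G := [ffun u => if u == v0 then deg D - \sum_(w | w != v0) md w else md u].
pose F w : divisor G := [ffun u => qd w * ([ffun u' => M * bdiv w u'] u)].
have DR : D - R = \sum_(w | w != v0) F w.
  apply/ffunP => u; rewrite !ffunE sum_ffunE.
  rewrite [RHS](eq_bigr (fun w => qd w * (M * ((u == w)%:Z - (u == v0)%:Z)))); last by move=> w _; rewrite /F !ffunE.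
  case: (eqVneq u v0) => [->|uv].
    rewrite ?eqxx [RHS](eq_bigr (fun w => - (qd w * M))); last first.
      by move=> w wv; rewrite eq_sym (negbTE wv); lia.
    have hs : \sum_(w | w != v0) D w = \sum_(w | w != v0) (qd w * M + md w).
      by apply: eq_bigr => w _; rewrite /qd /md -divz_eq.
    rewrite sumrN /deg (bigD1 v0) //= hs big_split /=. set S1 := \sum_(i | i != v0) qd i * M; set S2 := \sum_(i | i != v0) md i. lia.
  rewrite (bigD1 u uv) /= eqxx big1; last first.
    by move=> w /andP[_ wu]; rewrite eq_sym (negbTE wu); lia.
  have := divz_eq (D u) M; rewrite /md /qd; lia.
exists R; split.
  move=> u; rewrite ffunE; case: ifP => _; last exact: modz_ge0 (lt0r_neq0 M0).
  have h1 : \sum_(w | w != v0) md w <= \sum_(w | w != v0) M.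
    by apply: ler_sum => w _; exact: ltW (ltz_pmod _ M0).
  have h2 : \sum_(w : V) M = M + \sum_(w | w != v0) M := bigD1 v0 isT.
  lia.
rewrite /lin_equiv -opprB DR; apply: principalN; apply: principal_sum => w _.
exact: principalZ.
Qed.
End Torsion.

Section Rank.
Variable G : multigraph.
Local Notation V := (vert G).
Variable v0 : V.

Lemma rank_ge_deg (D : divisor G) (d : nat) : rank_ge D d -> d%:Z <= deg D.
Proof.
move=> H.
pose E : divisor G := [ffun u => if u == v0 then d%:Z else 0].
have effE : effective E by move=> u; rewrite ffunE; case: ifP.
have degE : deg E = d%:Z.
  rewrite /deg (bigD1 v0) //= big1 ?addr0; first by rewrite ffunE eqxx.
  by move=> u uv; rewrite ffunE (negbTE uv).
case: (H E effE degE) => D' [effD' PD'].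
have := deg_principal PD'; rewrite degB degB degE.
have := deg_ge0 effD'; lia.
Qed.

Lemma rank_lb (D : divisor G) (k : nat) : rank_ge D k -> k%:Z <= rank D.
Proof.
move=> Hk; rewrite /rank; case: pselect => [H|nH].
  by case: (cid H) => /= d [_ Hmax]; have := Hmax k Hk; lia.
exfalso; apply: nH.
pose P := fun d => `[< rank_ge D d >].
have exP : exists i, P i by exists k; exact/asboolP.
have ubP : forall i, P i -> (i <= `|deg D|%N)%N.
  by move=> i /asboolP /rank_ge_deg; lia.
case: (ex_maxnP exP ubP) => i Pi maxi.
exists i; split; first exact/asboolP.
by move=> d' Hd'; apply: maxi; exact/asboolP.
Qed.

Lemma rank_ub (D : divisor G) : -1 <= rank D /\ (rank D = -1 \/ rank D <= deg D).
Proof.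
rewrite /rank; case: pselect => [H|nH]; last by split; [|left].
case: (cid H) => /= d [Hd _]; have := rank_ge_deg Hd; split; [lia|right; lia].
Qed.

End Rank.

Lemma rank_empty (G : multigraph) (D : divisor G) : (forall v : vert G, False) -> rank D = -1.
Proof.
move=> nV; rewrite /rank; case: pselect => [H|//]; exfalso.
case: (cid H) => d [_ Hmax].
have : rank_ge D d.+1.
  move=> E _; rewrite /deg big1 // => v; by case: (nV v).
by move/Hmax; rewrite ltnn.
Qed.

Lemma degMn (G : multigraph) (D : divisor G) (l : nat) : deg (D *+ l) = deg D * l%:Z.
Proof.
rewrite /deg. under eq_bigr do rewrite ffunMnE.
by rewrite sumrMnl pmulrn mulrzz.
Qed.

Lemma bounds (G : multigraph) (HG : connected_graph G) (D : divisor G) :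
  exists L C : int, forall l : nat, l%:Z * L - C <= rank (D *+ l) <= l%:Z * L.
Proof.
case: (pselect (exists v : vert G, True)) => [[v0 _]|nV]; last first.
  exists 0, 1 => l; rewrite rank_empty; first by lia.
  by move=> v; apply: nV; exists v.
case: (riemann HG v0) => C [C0 HC].
have key : forall l : nat, deg D * l%:Z - C <= rank (D *+ l) /\ -1 <= rank (D *+ l)
    /\ (rank (D *+ l) = -1 \/ rank (D *+ l) <= deg D * l%:Z).
  move=> l.
  have [lb ub] := rank_ub v0 (D *+ l).
  rewrite -degMn.
  split => //.
  case: (lerP C (deg (D *+ l))) => hC; last by lia.
  have : rank_ge (D *+ l) `|deg (D *+ l) - C|%N.
    move=> E effE degE; apply: HC; rewrite degB degE; lia.
  move/(rank_lb v0); lia.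
case: (lerP (deg D) 0) => hd.
  by exists 0, (C + 1) => l; have := key l; nia.
by exists (deg D), (C + 1) => l; have := key l; nia.
Qed.

Section Lim.
Import numFieldNormedType.Exports.
Local Open Scope classical_set_scope.

Lemma seq_limit (R : realType) (r : nat -> int) (L C : int) :
  (forall l : nat, l%:Z * L - C <= r l <= l%:Z * L) ->
  (fun l : nat => ((r l)%:~R / l%:R : R)) @ \oo --> (L%:~R : R).
Proof.
move=> H; apply/(@cvgrPdist_le _ _ _ (nbhs \oo)) => e e0.
have C0 : 0 <= C by have := H 0%N; lia.
pose N := Num.truncn ((C%:~R : R) / e).
exists N.+1 => // l /= Nl.
have l0 : (0 < l)%N by lia.
have lR : (0 : R) < l%:R by rewrite ltr0n.
case/andP: (H l) => h1 h2.
have X0 : 0 <= L * l%:Z - r l by lia.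
have XC : L * l%:Z - r l <= C by lia.
have -> : (L%:~R - (r l)%:~R / l%:R : R) = ((L * l%:Z - r l)%:~R : R) / l%:R.
  by rewrite intrB intrM mulrBl mulfK // lt0r_neq0.
rewrite ger0_norm; last by rewrite divr_ge0 ?ler0z // ltW.
rewrite ler_pdivrMr //.
have h3 : (C%:~R : R) / e < l%:R.
  apply: (lt_le_trans (truncnS_gt _)); rewrite ler_nat; exact: Nl.
rewrite ltr_pdivrMr // in h3.
rewrite (mulrC e); apply: (le_trans _ (ltW h3)); rewrite ler_int; exact: XC.
Qed.

End Lim.

Unset Implicit Arguments. Set Strict Implicit.
Local Open Scope classical_set_scope.

Theorem mainTheorem4 (G : multigraph) (HG : connected_graph G) (D : divisor G) :
  exists L : Rdefinitions.R,
    (fun l : nat => ((rank (D *+ l))%:~R / l%:R : Rdefinitions.R)) @ \oo --> L.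
Proof.
case: (bounds HG D) => L [C HLC].
exists (L%:~R).
exact: (@seq_limit Rdefinitions.R (fun l => rank (D *+ l)) L C HLC).
Qed.
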